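(* Let $x^*\in\mathcal{X}$. If for every neighborhood $U$ of $x^*$ in $\mathcal{X}$ there is a solution $y_U(t)$ of $\dot y_k=v_k(Q(y))$, $k\in\mathcal{N}$, such that $x_U(t)=Q(y_U(t))\in U$ for all $t\ge0$, then $x^*$ is a Nash equilibrium.
   Context: Setting: finite game with players $\mathcal{N}$, action sets $\mathcal{A}_k$, mixed strategies $\mathcal{X}_k=\Delta(\mathcal{A}_k)$, $\mathcal{X}=\prod_k\mathcal{X}_k$, multilinear expected payoffs $u_k$, payoff vectors $v_k(x)=(u_k(\alpha;x_{-k}))_{\alpha\in\mathcal{A}_k}$. Each player has a penalty function $h_k$ on $\mathcal{X}_k$ (continuous, $C^\infty$ on relative interiors of faces, strongly convex: $h(tx_1+(1-t)x_2)\le th(x_1)+(1-t)h(x_2)-\tfrac12Kt(1-t)\|x_1-x_2\|^2$, $K>0$), with choice map $Q_k(y_k)=\arg\max_{x_k\in\mathcal{X}_k}\{\langle y_k,x_k\rangle-h_k(x_k)\}$; $Q=(Q_k)_k$. Nash equilibrium: $u_k(x^* )\ge u_k(x_k;x^*_{-k})$ for all $x_k\in\mathcal{X}_k$, $k\in\mathcal{N}$. *)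

(* Defs.v *)
From HB Require Import structures.
From mathcomp Require Import all_boot all_order all_algebra.
From mathcomp Require Import all_classical all_reals all_analysis.
Set Implicit Arguments. Unset Strict Implicit. Unset Printing Implicit Defensive.
Import Order.TTheory GRing.Theory Num.Theory.
Import numFieldNormedType.Exports.
Local Open Scope classical_set_scope.
Local Open Scope ring_scope.

Section Game.
Variables (R : realType) (I : finType) (n : I -> nat).
(* Player k has the finite action set 'I_(n k); a (mixed) strategy or a
   score vector of player k is a row vector in 'rV[R]_(n k). *)

Definition profile := forall k : I, 'rV[R]_(n k).
Definition pure_profile := {dffun forall k : I, 'I_(n k)}.

Definition simplex (m : nat) : set 'rV[R]_m :=
  [set x | (forall i, 0 <= x ord0 i) /\ \sum_i x ord0 i = 1].

Definition strat_space : set profile :=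
  [set x | forall k, simplex (x k)].

Definition inner (m : nat) (y x : 'rV[R]_m) : R := \sum_i y ord0 i * x ord0 i.

Definition exp_payoff (U : I -> pure_profile -> R) (k : I) (x : profile) : R :=
  \sum_(s : pure_profile) (\prod_(j : I) x j ord0 (s j)) * U k s.

Definition pure_strat (m : nat) (a : 'I_m) : 'rV[R]_m :=
  \row_b (a == b)%:R.

Definition deviate (x : profile) (k : I) (xk : 'rV[R]_(n k)) : profile :=
  @dfwith I (fun j => 'rV[R]_(n j)) x k xk.

Definition payoff_vec (U : I -> pure_profile -> R) (k : I) (x : profile)
  : 'rV[R]_(n k) :=
  \row_a exp_payoff U k (deviate x (pure_strat a)).

Definition is_Nash (U : I -> pure_profile -> R) (xs : profile) : Prop :=
  strat_space xs /\
  forall k (xk : 'rV[R]_(n k)), simplex xk ->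
    exp_payoff U k (deviate xs xk) <= exp_payoff U k xs.
End Game.

Fixpoint iter_dir_derive (R : realType) (m : nat)
    (f : 'rV[R]_m -> R) (ws : seq 'rV[R]_m) : 'rV[R]_m -> R :=
  match ws with
  | [::] => f
  | w :: ws' => fun x => 'D_w (iter_dir_derive f ws') x
  end.

Definition face_relint (R : realType) (m : nat) (S : {set 'I_m}) : set 'rV[R]_m :=
  [set x | simplex x /\ forall i, (0 < x ord0 i) <-> (i \in S)].

Definition face_tangent (R : realType) (m : nat) (S : {set 'I_m}) : set 'rV[R]_m :=
  [set w | (forall i, i \notin S -> w ord0 i = 0) /\ \sum_i w ord0 i = 0].

(* h is C^infty on the relative interior of every face of the simplex:
   all iterated directional derivatives along tangent directions exist
   there and are continuous there. *)
Definition smooth_on_faces (R : realType) (m : nat) (h : 'rV[R]_m -> R) : Prop :=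
  forall (S : {set 'I_m}) (ws : seq 'rV[R]_m),
    (forall w, w \in ws -> face_tangent S w) ->
    (forall x w, face_relint S x -> face_tangent S w ->
       derivable (iter_dir_derive h ws) x w) /\
    {within face_relint S, continuous (iter_dir_derive h ws)}.

(* Strong convexity of h on the simplex with modulus K (norm: the sup norm
   of 'rV[R]_m; all norms are equivalent in finite dimension). *)
Definition strongly_convex_on_simplex (R : realType) (m : nat)
    (h : 'rV[R]_m -> R) (K : R) : Prop :=
  forall (x1 x2 : 'rV[R]_m) (t : R), simplex x1 -> simplex x2 ->
    0 <= t <= 1 ->
    h (t *: x1 + (1 - t) *: x2) <=
      t * h x1 + (1 - t) * h x2 - 2^-1 * K * t * (1 - t) * `|x1 - x2| ^+ 2.

Definition penalty (R : realType) (m : nat) (h : 'rV[R]_m -> R) : Prop :=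
  {within simplex (R:=R) (m:=m), continuous h} /\
  smooth_on_faces h /\
  exists K : R, 0 < K /\ strongly_convex_on_simplex h K.

Definition is_choice_map (R : realType) (m : nat) (h : 'rV[R]_m -> R)
    (Q : 'rV[R]_m -> 'rV[R]_m) : Prop :=
  forall y, simplex (Q y) /\
    forall x, simplex x -> inner y x - h x <= inner y (Q y) - h (Q y).

(* Main.v *)
Require Import Defs.
From HB Require Import structures.
From mathcomp Require Import all_boot all_order all_algebra.
From mathcomp Require Import all_classical all_reals all_analysis.
From mathcomp Require Import ring lra.
Import Order.TTheory GRing.Theory Num.Theory.
Import numFieldNormedType.Exports.
Local Open Scope classical_set_scope.
Local Open Scope ring_scope.


Lemma simplex_ge0 (R : realType) m (x : 'rV[R]_m) i : simplex x -> 0 <= x ord0 i.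
Proof. by case=> H _; apply: H. Qed.

Lemma simplex_le1 (R : realType) m (x : 'rV[R]_m) i : simplex x -> x ord0 i <= 1.
Proof.
case=> H1 H2; rewrite -H2 (bigD1 i) //= lerDl.
by apply: sumr_ge0 => j _; apply: H1.
Qed.

Lemma norm_le_entries (R : realType) m (x : 'rV[R]_m) (r : R) : 0 <= r ->
  (forall i, `|x ord0 i| <= r) -> `|x| <= r.
Proof.
move=> r0 H; rewrite [X in X <= _]/Num.norm /= mx_normrE.
apply/bigmax_leP; split => // -[a b] _ /=.
by rewrite (ord1 a); apply: H.
Qed.

Lemma prod_diff (R : realType) (T : Type) (r : seq T) (a b : T -> R) :
  (forall i, 0 <= a i <= 1) -> (forall i, 0 <= b i <= 1) ->
  `|\prod_(i <- r) a i - \prod_(i <- r) b i| <= \sum_(i <- r) `|a i - b i|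
  /\ 0 <= \prod_(i <- r) a i <= 1 /\ 0 <= \prod_(i <- r) b i <= 1.
Proof.
move=> Ha Hb; elim: r => [|i r [IH [/andP[A0 A1] /andP[B0 B1]]]].
  rewrite !big_nil subrr normr0; split; first by [].
  by split; rewrite ler01 lexx.
rewrite !big_cons.
have /andP[a0 a1] := Ha i; have /andP[b0 b1] := Hb i.
split; last by split; apply/andP; split;
  [exact: mulr_ge0| exact: mulr_ile1 | exact: mulr_ge0 | exact: mulr_ile1].
have -> : a i * \prod_(j <- r) a j - b i * \prod_(j <- r) b j =
   (a i - b i) * \prod_(j <- r) a j + b i * (\prod_(j <- r) a j - \prod_(j <- r) b j)
  by ring.
apply: (le_trans (ler_normD _ _)); apply: lerD.
  rewrite normrM -[X in _ <= X]mulr1; apply: ler_wpM2l => //.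
  by rewrite ger0_norm.
rewrite normrM; apply: (le_trans _ IH).
rewrite -[X in _ <= X]mul1r; apply: ler_wpM2r => //.
by rewrite ger0_norm.
Qed.

Lemma within_eps (R : realType) m (h : 'rV[R]_m -> R) (A : set 'rV[R]_m) x :
  {within A, continuous h} -> A x -> forall e : R, 0 < e ->
  exists2 d : R, 0 < d & forall z, A z -> `|x - z| < d -> `|h x - h z| < e.
Proof.
move=> /subspace_continuousP /(_ x) hc Ax e e0.
have := hc Ax; move=> /cvgrPdist_lt /(_ e e0).
rewrite near_withinE => /nbhs_ballP [d d0 Hd].
exists d => // z Az xz; apply: Hd => //.
by rewrite -ball_normE.
Qed.

Lemma entry_le (R : realType) m (x : 'rV[R]_m) i : `|x ord0 i| <= `|x|.
Proof.
rewrite [X in _ <= X]/Num.norm /= mx_normrE.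
by apply/bigmax_geP; right; exists (ord0, i).
Qed.

Lemma is_derive_coord (R : realType) m (f : R -> 'rV[R]_m) (t : R) (df : 'rV[R]_m) (i : 'I_m) :
  is_derive t 1 f df -> is_derive t 1 (fun s => f s ord0 i) (df ord0 i).
Proof.
move=> [Hd Hv].
have C : (fun h : R => h^-1 *: ((fun s => f s ord0 i) (h *: 1 + t) - f t ord0 i)) @ 0^' --> df ord0 i.
  have := Hd; rewrite /derivable => /cvg_ex [l Hl].
  have El : 'D_1 f t = l by apply: cvg_lim.
  rewrite Hv in El; subst l.
  have := cvg_comp _ _ Hl (@coord_continuous _ 1 m ord0 i (df)).
  apply: cvg_trans; apply: near_eq_cvg; near=> h.
  by rewrite /= !mxE.
apply: DeriveDef; first by apply/cvg_ex; exists (df ord0 i).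
by apply: cvg_lim.
Unshelve. all: by end_near.
Qed.

Section P.
Variables (R : realType) (I : finType) (n : I -> nat)
  (U : I -> pure_profile n -> R) (k : I).

Definition Pk (x : profile R n) (s : pure_profile n) : R :=
  \prod_(j | j != k) x j ord0 (s j).

Lemma exp_split x : exp_payoff U k x = \sum_(s : pure_profile n) x k ord0 (s k) * Pk x s * U k s.
Proof. by apply: eq_bigr => s _; rewrite (bigD1 k) //= mulrA. Qed.

Lemma dev_k x (xk : 'rV[R]_(n k)) : deviate x xk k = xk.
Proof. by rewrite /deviate dfwithin. Qed.

Lemma dev_out x (xk : 'rV[R]_(n k)) j : j != k -> deviate x xk j = x j.
Proof. by move=> jk; rewrite /deviate dfwithout // eq_sym. Qed.

Lemma Pk_dev x (xk : 'rV[R]_(n k)) s : Pk (deviate x xk) s = Pk x s.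
Proof. by apply: eq_bigr => j jk; rewrite dev_out. Qed.

Lemma pv_entry x a : payoff_vec U k x ord0 a =
  \sum_(s : pure_profile n) (a == s k)%:R * Pk x s * U k s.
Proof.
rewrite mxE exp_split; apply: eq_bigr => s _.
by rewrite Pk_dev dev_k mxE.
Qed.

Lemma lin x (w : 'rV[R]_(n k)) :
  \sum_a w ord0 a * payoff_vec U k x ord0 a =
  \sum_(s : pure_profile n) w ord0 (s k) * Pk x s * U k s.
Proof.
under eq_bigr do rewrite pv_entry big_distrr.
rewrite exchange_big /=; apply: eq_bigr => s _.
rewrite (bigD1 (s k)) //= eqxx mul1r big1 ?addr0 ?mulrA // => a /negbTE ->.
by rewrite mul0r mul0r mulr0.
Qed.

Lemma exp_dev_lin x (xk : 'rV[R]_(n k)) : exp_payoff U k (deviate x xk) =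
  \sum_a xk ord0 a * payoff_vec U k x ord0 a.
Proof. by rewrite lin exp_split; apply: eq_bigr => s _; rewrite Pk_dev dev_k. Qed.

Lemma exp_lin x : exp_payoff U k x =
  \sum_a x k ord0 a * payoff_vec U k x ord0 a.
Proof. by rewrite lin exp_split. Qed.

Definition Cst := \sum_(s : pure_profile n) (\sum_(j : I) (1:R)) * `|U k s|.

Lemma exp_close (x1 x2 : profile R n) (e : R) :
  (forall j i, 0 <= x1 j ord0 i <= 1) -> (forall j i, 0 <= x2 j ord0 i <= 1) ->
  (forall j i, `|x1 j ord0 i - x2 j ord0 i| <= e) ->
  `|exp_payoff U k x1 - exp_payoff U k x2| <= e * Cst.
Proof.
move=> H1 H2 He; rewrite /exp_payoff -sumrB /Cst mulr_sumr.
apply: (le_trans (ler_norm_sum _ _ _)); apply: ler_sum => s _.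
rewrite -mulrBl normrM mulrA; apply: ler_wpM2r => //.
have [D _] := @prod_diff R I (index_enum I) _ _ (fun j => H1 j (s j)) (fun j => H2 j (s j)).
apply: (le_trans D); apply: (le_trans (ler_sum _ (fun j _ => He j (s j)))).
by rewrite mulr_sumr; apply: ler_sum => j _; rewrite mulr1.
Qed.

Lemma pure_entry m (a : 'I_m) i : 0 <= (pure_strat R a) ord0 i <= 1.
Proof. by rewrite mxE; case: (a == i); rewrite ?lexx ?ler01. Qed.

Lemma pv_close (x1 x2 : profile R n) (e : R) a : 0 <= e ->
  strat_space x1 -> strat_space x2 ->
  (forall j i, `|x1 j ord0 i - x2 j ord0 i| <= e) ->
  `|payoff_vec U k x1 ord0 a - payoff_vec U k x2 ord0 a| <= e * Cst.
Proof.
move=> e0 S1 S2 He; rewrite !mxE; apply: exp_close.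
- move=> j; case: (eqVneq j k) => [->|jk] i; first by rewrite dev_k pure_entry.
  by rewrite dev_out // simplex_ge0 ?simplex_le1.
- move=> j; case: (eqVneq j k) => [->|jk] i; first by rewrite dev_k pure_entry.
  by rewrite dev_out // simplex_ge0 ?simplex_le1.
- move=> j; case: (eqVneq j k) => [->|jk] i; first by rewrite !dev_k subrr normr0.
  by rewrite !dev_out.
Qed.
End P.

Arguments simplex_ge0 {R m x} i.
Arguments simplex_le1 {R m x} i.
Arguments within_eps {R m h A x}.
Arguments entry_le {R m} x i.
Arguments is_derive_coord {R m f t df} i.

Lemma sum_pure (R : realType) m (a : 'I_m) : \sum_i ((a == i)%:R : R) = 1.
Proof.
rewrite (bigD1 a) //= eqxx big1 ?addr0 // => i /negbTE.
by rewrite eq_sym => ->.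
Qed.

Lemma sum_pure_mul (R : realType) m (a : 'I_m) (y : 'rV[R]_m) :
  \sum_i y ord0 i * (a == i)%:R = y ord0 a.
Proof.
rewrite (bigD1 a) //= eqxx mulr1 big1 ?addr0 // => i /negbTE.
by rewrite eq_sym => ->; rewrite mulr0.
Qed.

Theorem proposition5p2 (R : realType) (I : finType) (n : I -> nat)
  (U : I -> pure_profile n -> R)
  (h : forall k : I, 'rV[R]_(n k) -> R)
  (Q : forall k : I, 'rV[R]_(n k) -> 'rV[R]_(n k))
  (Hh : forall k, penalty (h k))
  (HQ : forall k, is_choice_map (h k) (Q k))
  (xs : profile R n) (Hxs : strat_space xs) :
  (forall Uset : set (profile R n),
     (exists2 e : R, 0 < e &
        forall x, strat_space x -> (forall k, `|x k - xs k| < e) -> Uset x) ->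
     exists y : R -> profile R n,
       (forall k, {within [set t : R | 0 <= t], continuous (fun t => y t k)}) /\
       (forall k (t : R), 0 < t ->
          is_derive t 1 (fun s => y s k)
            (payoff_vec U k (fun j => Q j (y t j)))) /\
       (forall t : R, 0 <= t -> Uset (fun j => Q j (y t j)))) ->
  is_Nash U xs.
Proof.
move=> Hyp; split => // k xk Hxk.
rewrite exp_dev_lin exp_lin.
rewrite leNgt; apply/negP => Hlt.
pose pv x a := payoff_vec U k x ord0 a.
pose u := \sum_a xs k ord0 a * pv xs a.
have [al Hal] : exists al, u < pv xs al.
  case: (pselect (exists al, u < pv xs al)) => // Hn; exfalso.
  have Hle : forall a, pv xs a <= u.
    by move=> a; rewrite leNgt; apply/negP => H; apply: Hn; exists a.
  move: Hlt; apply/negP; rewrite -leNgt.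
  apply: (le_trans (ler_sum _ (fun a _ => ler_wpM2l (simplex_ge0 a Hxk) (Hle a)))).
  by rewrite -mulr_suml (proj2 Hxk) mul1r.
have [be [Hbe0 Hbe]] : exists be, 0 < xs k ord0 be /\ pv xs be < pv xs al.
  case: (pselect (exists be, 0 < xs k ord0 be /\ pv xs be < pv xs al)) => // Hn.
  exfalso.
  have Hge : forall b, pv xs al * xs k ord0 b <= xs k ord0 b * pv xs b.
    move=> b; rewrite mulrC; have := simplex_ge0 b (Hxs k).
    rewrite le_eqVlt => /orP[/eqP<-|pb]; first by rewrite !mul0r.
    apply: ler_wpM2l; first exact: ltW.
    by rewrite leNgt; apply/negP => H; apply: Hn; exists b.
  move: Hal; apply/negP; rewrite -leNgt.
  apply: le_trans (ler_sum _ (fun b _ => Hge b)).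
  by rewrite -mulr_sumr (proj2 (Hxs k)) mulr1.
have albe : al != be by apply/eqP => E; move: Hbe; rewrite E ltxx.
pose m := pv xs al - pv xs be.
have m0 : 0 < m by rewrite subr_gt0.
pose c := xs k ord0 be.
have [d d0 Hd] := within_eps (proj1 (Hh k)) (Hxs k) _ ltr01.
pose C := @Cst R I n U k.
have C0 : 0 <= C.
  by apply: sumr_ge0 => s _; apply: mulr_ge0 => //; apply: sumr_ge0 => j _.
pose e := Num.min (Num.min (c / 2) (d / 4)) (m / (4 * (C + 1))).
pose dl := Num.min (c / 2) (d / 2).
have C1 : 0 < 4 * (C + 1) by apply: mulr_gt0 => //; apply: ltr_wpDl.
have e0 : 0 < e.
  rewrite /e !lt_min; apply/andP; split; first (apply/andP; split).
  - by apply: divr_gt0.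
  - by apply: divr_gt0.
  - by apply: divr_gt0.
have ec : e <= c / 2 by rewrite /e !ge_min lexx.
have ed : e <= d / 4 by rewrite /e !ge_min lexx orbT.
have em : e * (4 * (C + 1)) <= m.
  by rewrite -ler_pdivlMr // /e ge_min lexx orbT.
have eC : e * C <= m / 4.
  have : e * C <= e * (C + 1) by apply: ler_wpM2l; [exact: ltW | rewrite lerDl].
  lra.
have dl0 : 0 < dl by rewrite /dl lt_min; apply/andP; split; apply: divr_gt0.
have dlc : dl <= c / 2 by rewrite /dl ge_min lexx.
have dld : dl <= d / 2 by rewrite /dl ge_min lexx orbT.
have [y [Hc [Hder Hin]]] := Hyp
  (fun x => strat_space x /\ forall j, `|x j - xs j| < e)
  (ex_intro2 _ _ e e0 (fun x Sx Hx => conj Sx Hx)).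
pose X t := fun j => Q j (y t j).
have HX : forall t, 0 <= t -> strat_space (X t) by move=> t /Hin [].
have Hent : forall t, 0 <= t -> forall j i, `|X t j ord0 i - xs j ord0 i| <= e.
  move=> t t0 j i; have [_ /(_ j) H] := Hin t t0.
  apply: ltW; apply: le_lt_trans H.
  by have := entry_le (X t j - xs j) i; rewrite !mxE.
pose g t := y t k ord0 al - y t k ord0 be.
pose g' t := pv (X t) al - pv (X t) be.
have claimB : forall t, 0 < t -> m / 2 <= g' t.
  move=> t t0.
  have H1 := @pv_close R I n U k (X t) xs e al (ltW e0) (HX t (ltW t0)) Hxs (Hent t (ltW t0)).
  have H2 := @pv_close R I n U k (X t) xs e be (ltW e0) (HX t (ltW t0)) Hxs (Hent t (ltW t0)).
  move: H1 H2; rewrite /g' /m /pv -/C !ler_norml.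
  move=> /andP[H1 H1'] /andP[H2 H2']; move: eC; rewrite /m /pv; lra.
have claimA : forall t, 0 <= t -> dl * g t <= 2.
  move=> t t0.
  pose x := Q k (y t k).
  have Sx : simplex x := HX t t0 k.
  have Hxe : forall i, `|x ord0 i - xs k ord0 i| <= e := Hent t t0 k.
  pose z := x + dl *: (pure_strat R al - pure_strat R be).
  have zE : forall i, z ord0 i = x ord0 i + dl * ((al == i)%:R - (be == i)%:R).
    by move=> i; rewrite !mxE.
  have Sz : simplex z.
    split.
    - move=> i; rewrite zE.
      case: (eqVneq be i) => [<-|bi].
        rewrite (negbTE albe) sub0r mulrN1.
        have := Hxe be; rewrite ler_norml => /andP[H1 _].
        rewrite subr_ge0; move: H1 dlc ec; rewrite /c; lra.
      rewrite subr0; apply: addr_ge0; first exact: simplex_ge0.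
      by apply: mulr_ge0; [exact: ltW| case: (al == i)].
    - under eq_bigr do rewrite zE.
      rewrite big_split /= (proj2 Sx) -mulr_sumr sumrB !sum_pure subrr mulr0 addr0.
      by [].
  have [_ Hopt] := HQ k (y t k).
  have := Hopt z Sz; rewrite -/x.
  have innerE : inner (y t k) z = inner (y t k) x + dl * g t.
    rewrite /inner /g.
    under eq_bigr do rewrite zE mulrDr.
    rewrite big_split /=; congr (_ + _).
    under eq_bigr do rewrite mulrCA.
    rewrite -mulr_sumr; congr (_ * _).
    under eq_bigr do rewrite mulrBr.
    by rewrite sumrB !sum_pure_mul.
  rewrite innerE => Hle.
  have Hdx : `|xs k - x| < d.
    apply: (le_lt_trans (@norm_le_entries R _ (xs k - x) e (ltW e0) _)).
      by move=> i; rewrite !mxE distrC.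
    move: ed d0; lra.
  have Hdz : `|xs k - z| < d.
    apply: (le_lt_trans (@norm_le_entries R _ (xs k - z) (e + dl) _ _)).
    - by apply: addr_ge0; apply: ltW.
    - move=> i; rewrite !mxE.
      have -> : xs k ord0 i - (x ord0 i + dl * ((al == i)%:R - (be == i)%:R)) =
        (xs k ord0 i - x ord0 i) - dl * ((al == i)%:R - (be == i)%:R) by ring.
      apply: (le_trans (ler_normB _ _)); apply: lerD; first by rewrite distrC.
      rewrite normrM (gtr0_norm dl0) -[X in _ <= X]mulr1; apply: ler_wpM2l; first exact: ltW.
      by case: (al == i); case: (be == i); rewrite /= ?subrr ?normr0 ?subr0 ?sub0r ?normrN ?normr1 ?ler01.
    - move: ed dld d0; lra.
  have H1 := Hd x Sx Hdx; have H2 := Hd z Sz Hdz.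
  move: H1 H2; rewrite !ltr_norml => /andP[H1 H1'] /andP[H2 H2'].
  move: Hle; lra.
have gcont : {within [set t : R | 0 <= t], continuous g}.
  move=> t; rewrite /from_subspace /g.
  apply: (@continuousB R _ (subspace [set t0 : R | 0 <= t0]) (fun s => y s k ord0 al) (fun s => y s k ord0 be)).
  - exact: (continuous_comp (Hc k t) (@coord_continuous _ 1 _ ord0 al _)).
  - exact: (continuous_comp (Hc k t) (@coord_continuous _ 1 _ ord0 be _)).
pose W := `|g 0| + 2 / dl + 1.
have W0 : 0 < W.
  apply: ltr_wpDl; last exact: ltr01.
  by apply: addr_ge0 => //; apply: ltW; apply: divr_gt0.
pose T := 2 * W / m.
have T0 : 0 < T by apply: divr_gt0 => //; apply: mulr_gt0.
have Hd1 : forall t, t \in `]0, T[%R -> is_derive t 1 g (g' t).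
  move=> t tI; have t0 : 0 < t by move: tI; rewrite in_itv /= => /andP[].
  move: (is_deriveB (is_derive_coord al (Hder k t t0)) (is_derive_coord be (Hder k t t0))) => H.
  exact H.
have Hc1 : {within `[0, T], continuous g}.
  apply: continuous_subspaceW gcont => t /=; rewrite in_itv /= => /andP[].
  by [].
have [cc ccI Hmvt] := @MVT R g g' 0 T T0 Hd1 Hc1.
have cc0 : 0 < cc by move: ccI; rewrite in_itv /= => /andP[].
have HB := claimB cc cc0.
have HA := claimA T (ltW T0).
have Tm : m / 2 * T = W.
  rewrite /T; field; exact: lt0r_neq0.
have H1 : m / 2 * T <= g' cc * T by apply: ler_wpM2r => //; exact: ltW.
have H2 : - g 0 <= `|g 0| by rewrite -normrN ler_norm.
have H3 : 2 / dl + 1 <= g T by move: Hmvt H1 H2; rewrite Tm /W; lra.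
have H4 : dl * (2 / dl + 1) <= dl * g T by apply: ler_wpM2l => //; exact: ltW.
have H5 : dl * (2 / dl + 1) = 2 + dl by field; exact: lt0r_neq0.
move: HA H4 H5 dl0; lra.
Qed.
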